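(* Let $G=(V,E)$ be a finite simple connected graph, and let $\varphi$ be a failure pattern having at least one correct node, and set $R(\varphi)=\min_{v\in V}\mathrm{ecc}(v,\varphi)$. Then no algorithm (oblivious or not), even when the failure pattern $\varphi$ is known to all nodes in advance, solves binary consensus (inputs in $\{0,1\}$) in $G$ under failure pattern $\varphi$ in fewer than $R(\varphi)$ rounds. Consequently, under the $t$-resilient model consensus in $G$ requires at least $\max_{\varphi\in\Phi^{(t)}_{\mathrm{all}}}\min_{v\in V}\mathrm{ecc}(v,\varphi)$ rounds.
   Context: $N(v)$ is the neighbourhood of $v$. Synchronous rounds; each node sends a message to every neighbour in each round, receives its neighbours' messages, and computes; a node's state can only depend on information received along the message transmissions that occur. Failure patterns. A failure pattern is a set $\varphi=\{(v,F_v,f_v): v\in F\}$ with $F\subseteq V$, integers $f_v\ge1$ and nonempty $F_v\subseteq N(v)$: $v$ acts normally in rounds $<f_v$, in round $f_v$ its messages reach exactly $N(v)\setminus F_v$, afterwards it sends nothing. Nodes in $F$ are faulty, others correct. $\Phi^{(t)}_{\mathrm{all}}$ is the set of failure patterns with $|F|\le t$. Causal paths and eccentricity. A causal path w.r.t. $\varphi$ from $v$ to $v'$ is $u_1=v,\dots,u_q=v'$ with $u_{i+1}\in N(u_i)$, $u_i$ not crashed during rounds $1,\dots,i-1$, and $u_{i+1}\notin F_{u_i}$ if $u_i$ crashes at round $i$; length $q-1$. $\mathrm{ecc}(v,\varphi)$ is the maximum over correct $v'$ of the minimum length of a causal path from $v$ to $v'$ ($\infty$ if some correct $v'$ has none).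 Consensus. Every correct node outputs a value; all correct nodes output the same value, and it equals the input of some node. *)

(* Defs.v *)
From mathcomp Require Import all_boot.
Set Implicit Arguments. Unset Strict Implicit. Unset Printing Implicit Defensive.

Section Model.
Variable V : finType.
Variable e : rel V.  (* adjacency: u \in N(v) iff e v u *)

Definition simple_connected_graph : Prop :=
  symmetric e /\ irreflexive e /\ (forall x y : V, connect e x y).

(* A failure pattern: F (faulty set), for each v the set F_v and crash round f_v.
   Only the values at v \in F are meaningful. *)
Record pattern := Pattern {
  pF  : {set V};
  pFv : V -> {set V};
  pf  : V -> nat }.

Definition valid_pattern (phi : pattern) : Prop :=
  forall v, v \in pF phi ->
    [/\ 1 <= pf phi v, pFv phi v != set0 & pFv phi v \subset [set u | e v u]].

Definition correct (phi : pattern) (v : V) : bool := v \notin pF phi.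

(* The message of u to its neighbour w in round i (i >= 1) is transmitted:
   u is correct, or u crashes at a later round, or u crashes exactly at round i
   and w \notin F_u. *)
Definition delivered (phi : pattern) (u w : V) (i : nat) : bool :=
  [|| u \notin pF phi, i < pf phi u | (i == pf phi u) && (w \notin pFv phi u)].

(* Causal path w.r.t. phi from v to v' of length k: a sequence u_1 = v, ..., u_{k+1} = v'
   with u_{i+1} \in N(u_i), u_i not crashed during rounds 1..i-1 and
   u_{i+1} \notin F_{u_i} if u_i crashes at round i; i.e. the message of u_i to
   u_{i+1} in round i is transmitted. *)
Definition causal_path (phi : pattern) (v v' : V) (k : nat) : Prop :=
  exists p : seq V,
    [/\ size p = k.+1, head v p = v, last v p = v' &
        forall i, i < k ->
          e (nth v p i) (nth v p i.+1) && delivered phi (nth v p i) (nth v p i.+1) i.+1].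

(* ecc(v, phi) <= k : every correct v' has a causal path from v of length <= k
   (so the minimum length is <= k, hence the max over correct v' is <= k;
   ecc = oo is never <= k). *)
Definition ecc_le (phi : pattern) (v : V) (k : nat) : Prop :=
  forall v', correct phi v' -> exists2 j, j <= k & causal_path phi v v' j.

Definition R_le (phi : pattern) (k : nat) : Prop := exists v, ecc_le phi v k.

(* Execution of a general deterministic synchronous algorithm with state type S
   and message type M: initial state from (node, input); in round i each node v
   sends  send i v (state) w  to each neighbour w; the new state is computed from
   the old one and, for each u, Some message if u is a neighbour whose message
   reached v in round i, None otherwise. *)
Section Exec.
Variables (S M : Type).
Variable init : V -> bool -> S.
Variable send : nat -> V -> S -> V -> M.
Variable trans : nat -> V -> S -> (V -> option M) -> S.

Fixpoint exec (phi : pattern) (x : V -> bool) (k : nat) : V -> S :=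
  match k with
  | 0 => fun v => init v (x v)
  | k'.+1 => fun v =>
      trans k'.+1 v (exec phi x k' v)
        (fun u => if e u v && delivered phi u v k'.+1
                  then Some (send k'.+1 u (exec phi x k' u) v) else None)
  end.

Definition solves_consensus (out : V -> S -> bool) (phi : pattern) (r : nat) : Prop :=
  forall x : V -> bool,
    (forall v w, correct phi v -> correct phi w ->
       out v (exec phi x r v) = out w (exec phi x r w)) /\
    (forall v, correct phi v -> exists u, out v (exec phi x r v) = x u).
End Exec.
End Model.

(* Main.v *)
Require Import Defs.
From mathcomp Require Import all_boot.
From Stdlib Require Import Classical FunctionalExtensionality.
From mathcomp Require Import zify.
Set Implicit Arguments. Unset Strict Implicit.

Section Aux.
Variable V : finType.
Variable e : rel V.
Variable phi : pattern V.

Definition Dk (k : nat) (w v : V) : Prop := exists2 j, j <= k & causal_path e phi v w j.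

Lemma delivered_mono u w i i' : i' <= i -> delivered phi u w i -> delivered phi u w i'.
Proof.
rewrite /delivered => hi /or3P [->|h|/andP[/eqP h1 h2]]; first by [].
  by rewrite (leq_ltn_trans hi h) orbT.
case: (ltnP i' (pf phi u)) => h3; first by rewrite orbT.
have -> : i' == pf phi u by apply/eqP; lia.
by rewrite h2 !orbT.
Qed.

Lemma path0 v : causal_path e phi v v 0.
Proof. exists [:: v]; split => // i; by []. Qed.

Lemma path_ext v u w j k : j <= k -> causal_path e phi v u j -> e u w ->
  delivered phi u w k.+1 -> causal_path e phi v w j.+1.
Proof.
move=> hjk [p [hs hh hl hp]] huw hd.
exists (rcons p w); split.
- by rewrite size_rcons hs.
- by clear hl hp; case: p hs hh.
- by rewrite last_rcons.
move=> i hi.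
have Hn : forall m, m < size p -> nth v (rcons p w) m = nth v p m.
  by move=> m hm; rewrite nth_rcons hm.
case: (ltnP i j) => hij.
  rewrite !Hn ?hs; [exact: hp| lia | lia].
have -> : i = j by lia.
rewrite Hn ?hs // nth_rcons hs ltnn eqxx.
have -> : nth v p j = u.
  by rewrite -hl -nth_last hs.
rewrite huw /=. apply: delivered_mono hd. lia.
Qed.

Lemma exec_local S M (init : V -> bool -> S) (send : nat -> V -> S -> V -> M)
  (trans : nat -> V -> S -> (V -> option M) -> S) k :
  forall w x y, (forall v, Dk k w v -> x v = y v) ->
    exec e init send trans phi x k w = exec e init send trans phi y k w.
Proof.
elim: k => [|k IH] w x y hxy /=.
  rewrite hxy //; exists 0 => //; exact: path0.
rewrite (IH w x y); last first.
  by move=> v [j hj hp]; apply: hxy; exists j => //; apply: leqW.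
congr (trans _ _ _ _).
apply: functional_extensionality => u.
case hb: (e u w && delivered phi u w k.+1) => //.
move/andP: hb => [hu hd].
rewrite (IH u x y) // => v [j hj hp]; apply: hxy.
exists j.+1; first by [].
exact: path_ext hj hp hu hd.
Qed.

End Aux.

Lemma part1 (V : finType) (e : rel V) (phi : pattern V) :
  (exists v, correct phi v) ->
   forall (S M : Type) (init : V -> bool -> S) (send : nat -> V -> S -> V -> M)
          (trans : nat -> V -> S -> (V -> option M) -> S) (out : V -> S -> bool) (r : nat),
     solves_consensus e init send trans out phi r -> R_le e phi r.
Proof.
move=> [c hc] S M init send trans out r hs.
apply: NNPP => hR.
have hnot : forall a, exists v', correct phi v' /\ ~ Dk e phi r v' a.
  move=> a; apply: NNPP => hn; apply: hR; exists a => v' hv'.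
  apply: NNPP => hd; apply: hn; exists v'; split => //.
set ex := fun s : seq V => fun v : V => v \in s.
have key : forall s, out c (exec e init send trans phi (ex s) r c) = false.
  elim => [|a s IH].
    have [_ hv] := hs (ex [::]).
    by have [u ->] := hv c hc.
  have [v' [hv' hD]] := hnot a.
  have [ha _] := hs (ex (a :: s)).
  have [hb _] := hs (ex s).
  rewrite (ha c v') // (@exec_local _ e phi _ _ init send trans r v' _ (ex s)); first by rewrite -(hb c v').
  move=> v hv; rewrite /ex in_cons.
  case: (eqVneq v a) => [hva|] //=.
  by subst v; exfalso.
have [_ hv] := hs (ex (enum V)).
have [u hu] := hv c hc.
by move: hu; rewrite key /ex mem_enum.
Qed.

Theorem mainTheorem7 (V : finType) (e : rel V) :
  simple_connected_graph e ->
  (* lower bound for a fixed pattern phi (the algorithm may depend on phi) *)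
  (forall phi : pattern V, valid_pattern e phi -> (exists v, correct phi v) ->
   forall (S M : Type) (init : V -> bool -> S) (send : nat -> V -> S -> V -> M)
          (trans : nat -> V -> S -> (V -> option M) -> S) (out : V -> S -> bool) (r : nat),
     solves_consensus e init send trans out phi r -> R_le e phi r)
  /\
  (* t-resilient consequence: r >= max over phi in Phi^(t)_all of R(phi) *)
  (0 < #|V| ->
   forall (t : nat) (S M : Type) (init : V -> bool -> S) (send : nat -> V -> S -> V -> M)
          (trans : nat -> V -> S -> (V -> option M) -> S) (out : V -> S -> bool) (r : nat),
     (forall phi : pattern V, valid_pattern e phi -> #|pF phi| <= t ->
        solves_consensus e init send trans out phi r) ->
     forall phi : pattern V, valid_pattern e phi -> #|pF phi| <= t -> R_le e phi r).
Proof.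
move=> _; split.
  by move=> phi _; apply: part1.
move=> hV t S M init send trans out r hall phi hphi ht.
case: (classic (exists v, correct phi v)) => hc.
  exact: (part1 hc (hall phi hphi ht)).
case/card_gt0P: hV => v0 _.
exists v0 => v' hv'; exfalso; apply: hc; by exists v'.
Qed.
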